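(* For any $D\subset S$ and $A\subset\Omega$: (a) if $\phi\in F^D_A$, then $\phi_\pi\in F^D_A$; (b) $\overline{F^D_A}\cap\mathcal H_\pi=\overline{F^D_A\cap\mathcal H_\pi}$.
   Context: Let $\mathcal H$ be a complex Hilbert space; $\overline V$ is the closure of $V$. A projection is a bounded self-adjoint idempotent operator; $\wedge_\alpha p_\alpha$ is the projection onto the intersection of ranges. Let $S$ be a set; for each $t\in S$ let $\Gamma(t)$ be a countable set and for $a\in\Gamma(t)$ let $p^t_a$ be a projection on $\mathcal H$ with $\sum_{a\in\Gamma(t)}p^t_a=I$ (strong convergence). Let $\pi=\{p^t_a\}$ and $p^{t_1,\dots,t_k}_{a_1,\dots,a_k}=\wedge_{i=1}^kp^{t_i}_{a_i}$. $\pi$ commutes on $\phi$ if $W\phi=V\phi$ whenever $W,V$ are finite products of elements of $\pi$ with the same factors (with multiplicity) in possibly different orders; $\mathcal H_\pi$ is the closed subspace of such $\phi$, $p_\pi$ its projection, $\phi_\pi=p_\pi\phi$. Let $\Omega=\prod_{t\in S}\Gamma(t)$. For $A\subset\Omega$ and $D\subset S$, $F^D_A=\{\phi\in\mathcal H:$ for every $\omega\in A$ there are $t_1,\dots,t_k\in D$ with $p^{t_1,\dots,t_k}_{\omega_{t_1},\dots,\omega_{t_k}}\phi=0\}$. *)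

(* Defs.v *)
From HB Require Import structures.
From mathcomp Require Import all_boot all_order all_algebra.
From mathcomp Require Import complex.
From mathcomp Require Import reals.
From Stdlib Require List Permutation.
Set Implicit Arguments. Unset Strict Implicit. Unset Printing Implicit Defensive.
Import Order.TTheory GRing.Theory Num.Theory.
Local Open Scope ring_scope.

Section Hilbert.
Variables (R : realType) (H : lmodType R[i]) (inner : H -> H -> R[i]).

Definition dist2 (x y : H) : R[i] := inner (x - y) (x - y).

Definition is_hilbert : Prop :=
  [/\ (forall (a : R[i]) x y z, inner (a *: x + y) z = a * inner x z + inner y z),
      (forall x y, inner y x = (inner x y)^*),
      (forall x, 0 <= inner x x),
      (forall x, inner x x = 0 -> x = 0) &
      (forall u : nat -> H,
         (forall e : R[i], 0 < e -> exists N, forall m n, (N <= m)%N -> (N <= n)%N ->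
            dist2 (u m) (u n) < e) ->
         exists l, forall e : R[i], 0 < e -> exists N, forall n, (N <= n)%N ->
            dist2 (u n) l < e)].

Definition closureH (V : H -> Prop) : H -> Prop :=
  fun x => forall e : R[i], 0 < e -> exists v, V v /\ dist2 x v < e.

Definition is_projection (P : H -> H) : Prop :=
  [/\ (forall (a : R[i]) x y, P (a *: x + y) = a *: P x + P y),
      (exists M : R[i], forall x, inner (P x) (P x) <= M * inner x x),
      (forall x y, inner (P x) y = inner x (P y)) &
      (forall x, P (P x) = P x)].

Definition rangeH (P : H -> H) : H -> Prop := fun x => exists y, P y = x.

Definition proj_onto (P : H -> H) (M : H -> Prop) : Prop :=
  is_projection P /\ forall x, M x <-> rangeH P x.

Variables (S : Type) (Gamma : S -> countType) (p : forall t, Gamma t -> H -> H).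

(* for each t, the p^t_a (a in Gamma t) are projections with
   sum_a p^t_a = I (strong, unconditional convergence over the countable set) *)
Definition proj_family : Prop :=
  (forall t a, is_projection (@p t a)) /\
  (forall t (phi : H) (e : R[i]), 0 < e ->
     exists s0 : seq (Gamma t), forall s : seq (Gamma t), uniq s ->
        {subset s0 <= s} -> dist2 (\sum_(a <- s) @p t a phi) phi < e).

Definition prod_op (l : seq {t : S & Gamma t}) : H -> H :=
  foldr (fun i f => fun x => @p (projT1 i) (projT2 i) (f x)) id l.

Definition commutes_on (phi : H) : Prop :=
  forall l1 l2 : seq {t : S & Gamma t}, Permutation.Permutation l1 l2 ->
    prod_op l1 phi = prod_op l2 phi.

Definition H_pi : H -> Prop := fun phi => commutes_on phi.

Definition Omega := forall t : S, Gamma t.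

(* p^{t_1..t_k}_{a_1..a_k} = wedge_i p^{t_i}_{a_i}: projection onto the
   intersection of the ranges *)
Definition is_meet (ts : seq S) (om : Omega) (q : H -> H) : Prop :=
  proj_onto q (fun x => forall t, List.In t ts -> rangeH (@p t (om t)) x).

Definition F_DA (D : S -> Prop) (A : Omega -> Prop) : H -> Prop :=
  fun phi => forall om, A om ->
    exists ts : seq S, ts <> [::] /\ (forall t, List.In t ts -> D t) /\
      (forall q, is_meet ts om q -> q phi = 0).

End Hilbert.

(* Main.v *)
Require Import Defs.
From HB Require Import structures.
From mathcomp Require Import all_boot all_order all_algebra.
From mathcomp Require Import complex.
From mathcomp Require Import reals.
From mathcomp Require Import ring.
From Stdlib Require List Permutation.
Set Implicit Arguments. Unset Strict Implicit.
Import Order.TTheory GRing.Theory Num.Theory.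
Local Open Scope ring_scope.

Lemma ipD1 (R : realType) (H : lmodType R[i]) (inner : H -> H -> R[i]) :
  is_hilbert inner -> forall x y z, inner (x + y) z = inner x z + inner y z.
Proof. by case=> hl _ _ _ _ x y z; have := hl 1 x y z; rewrite scale1r mul1r. Qed.

Lemma ipB1 (R : realType) (H : lmodType R[i]) (inner : H -> H -> R[i]) :
  is_hilbert inner -> forall x y z, inner (x - y) z = inner x z - inner y z.
Proof.
move=> hh x y z; have [hl _ _ _ _] := hh.
by rewrite addrC -scaleN1r hl mulN1r addrC.
Qed.

Lemma ipB2 (R : realType) (H : lmodType R[i]) (inner : H -> H -> R[i]) :
  is_hilbert inner -> forall x y z, inner z (x - y) = inner z x - inner z y.
Proof.
move=> hh x y z; have [_ hs _ _ _] := hh.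
by rewrite [inner z x]hs [inner z y]hs hs (ipB1 hh) rmorphB.
Qed.

Lemma ip_eq (R : realType) (H : lmodType R[i]) (inner : H -> H -> R[i]) :
  is_hilbert inner -> forall u v, (forall z, inner u z = inner v z) -> u = v.
Proof.
move=> hh u v huv; have [_ _ _ hd _] := hh.
apply/eqP; rewrite -subr_eq0; apply/eqP/hd.
by rewrite (ipB1 hh) huv subrr.
Qed.

Lemma projB (R : realType) (H : lmodType R[i]) (inner : H -> H -> R[i]) P :
  is_projection inner P -> forall x y, P (x - y) = P x - P y.
Proof.
case=> hl _ _ _ x y.
by rewrite addrC -scaleN1r hl scaleN1r addrC.
Qed.

Lemma proj_fix (R : realType) (H : lmodType R[i]) (inner : H -> H -> R[i]) P M :
  proj_onto inner P M -> forall x, M x -> P x = x.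
Proof.
case=> [[_ _ _ hi] hM] x /hM [y <-]; exact: hi.
Qed.

Lemma proj_in (R : realType) (H : lmodType R[i]) (inner : H -> H -> R[i]) P M :
  proj_onto inner P M -> forall x, M (P x).
Proof. case=> _ hM x; apply/hM; by exists x. Qed.

Lemma proj_comm (R : realType) (H : lmodType R[i]) (inner : H -> H -> R[i]) q T :
  is_hilbert inner -> is_projection inner q ->
  (forall x y, inner (T x) y = inner x (T y)) ->
  (forall x, q (T (q x)) = T (q x)) -> forall x, q (T x) = T (q x).
Proof.
move=> hh [_ _ hqa _] hTa hinv x; apply: (ip_eq hh) => z.
rewrite hqa hTa -hinv -hqa -hTa -[in RHS]hinv hqa; done.
Qed.

Lemma nrm (R : realType) (H : lmodType R[i]) (inner : H -> H -> R[i]) P :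
  is_hilbert inner -> is_projection inner P -> forall z,
  inner (z - P z) (z - P z) = inner z z - inner (P z) (P z).
Proof.
move=> hh [_ _ ha hi] z.
rewrite (ipB1 hh) !(ipB2 hh).
have e1 : inner z (P z) = inner (P z) (P z) by rewrite ha hi.
have e2 : inner (P z) z = inner (P z) (P z) by rewrite -{1}hi ha.
rewrite e1 e2; ring.
Qed.

Lemma nrm_le (R : realType) (H : lmodType R[i]) (inner : H -> H -> R[i]) P :
  is_hilbert inner -> is_projection inner P -> forall z,
  inner (P z) (P z) <= inner z z /\ inner (z - P z) (z - P z) <= inner z z.
Proof.
move=> hh hP z; have [_ _ hpos _ _] := hh.
have := hpos (z - P z); rewrite (nrm hh hP) subr_ge0 => h1; split => //.
by rewrite lerBlDr lerDl hpos.
Qed.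

Lemma prod_op_cat (R : realType) (H : lmodType R[i]) (S : Type) (Gamma : S -> countType)
  (p : forall t, Gamma t -> H -> H) l l' x :
  prod_op p (l ++ l') x = prod_op p l (prod_op p l' x).
Proof. by elim: l => //= i l ->. Qed.

Lemma Hpi_inv (R : realType) (H : lmodType R[i]) (S : Type) (Gamma : S -> countType)
  (p : forall t, Gamma t -> H -> H) t a phi :
  H_pi p phi -> H_pi p (p t a phi).
Proof.
move=> hc l1 l2 hperm.
have := hc (l1 ++ [:: existT _ t a]) (l2 ++ [:: existT _ t a]).
rewrite !prod_op_cat /=; apply; exact: Permutation.Permutation_app_tail.
Qed.

Theorem lemma9 (R : realType) (H : lmodType R[i]) (inner : H -> H -> R[i])
    (S : Type) (Gamma : S -> countType) (p : forall t, Gamma t -> H -> H)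
    (p_pi : H -> H) (D : S -> Prop) (A : Omega Gamma -> Prop) :
  is_hilbert inner -> proj_family inner p ->
  proj_onto inner p_pi (H_pi p) ->
  (forall phi, F_DA inner p D A phi -> F_DA inner p D A (p_pi phi)) /\
  (forall x, (closureH inner (F_DA inner p D A) x /\ H_pi p x) <->
             closureH inner (fun y => F_DA inner p D A y /\ H_pi p y) x).
Proof.
move=> hh [hp _] hpi.
have hPpi : is_projection inner p_pi by case: hpi.
have step1 : forall t a x, p_pi (p t a x) = p t a (p_pi x).
  move=> t a; apply: (proj_comm hh hPpi); first by case: (hp t a).
  move=> x; apply: (proj_fix hpi); apply: Hpi_inv; exact: (proj_in hpi).
have partA : forall phi, F_DA inner p D A phi -> F_DA inner p D A (p_pi phi).
  move=> phi hF om hom; have [ts [hts [hD hq]]] := hF om hom.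
  exists ts; split => //; split => // q hm.
  have hqp : is_projection inner q by case: hm.
  have -> : q (p_pi phi) = p_pi (q phi).
    apply: (proj_comm hh hqp); first by case: hPpi.
    move=> x; apply: (proj_fix hm) => t ht.
    have hy := proj_in hm x t ht.
    exists (p_pi (q x)).
    have [_ _ _ hi] := hp t (om t).
    rewrite -step1; congr p_pi.
    by case: hy => y <-; rewrite hi.
  rewrite hq //; have := projB hPpi 0 0; rewrite !subrr; done.
split => // x; split.
  case=> hcl hx e he.
  have [v [hv hd]] := hcl e he.
  exists (p_pi v); split; first split.
  - exact: partA.
  - exact: (proj_in hpi).
  rewrite /dist2; have -> : x - p_pi v = p_pi (x - v) by rewrite (projB hPpi) (proj_fix hpi hx).
  apply: le_lt_trans hd; exact: (nrm_le hh hPpi _).1.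
move=> hcl; split.
  move=> e he; have [y [[hy _] hd]] := hcl e he; by exists y.
have hfx : p_pi x = x.
  apply/eqP; rewrite eq_sym -subr_eq0; apply/eqP.
  have [_ _ hpos hd0 _] := hh; apply: hd0.
  set w := x - p_pi x.
  have hlt : forall e, 0 < e -> inner w w < e.
    move=> e he; have [y [[_ hy] hd]] := hcl e he.
    have hpy : p_pi y = y by apply: (proj_fix hpi).
    have -> : w = (x - y) - p_pi (x - y).
      by rewrite /w (projB hPpi) hpy opprB addrA subrK.
    rewrite /dist2 in hd; apply: le_lt_trans hd; exact: (nrm_le hh hPpi _).2.
  have := hpos w; rewrite le0r => /orP [/eqP //|hp0].
  by have := hlt _ hp0; rewrite ltxx.
rewrite -hfx; exact: (proj_in hpi).
Qed.
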